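(* Let $M$ be an $n$-player Dec-POMDP satisfying hierarchical information sharing (HIS), fix a stage $\tau$, an occupancy state $s_\tau$ and a function $\beta_\tau$, and consider the single-stage subgame $G_{s_\tau}^{\beta_\tau}$ and the common-payoff perfect-information extensive-form game $\bar G_{s_\tau}^{\beta_\tau}$ (both defined in the context). Define functions $\beta^{i,*}_\tau$, $i=n,n-1,\dots,1$, on nodes of player $i$ and actions $u^i_\tau\in U^i$ by $$\beta^{n,*}_\tau(\varsigma^n_\tau,u^n_\tau)=R(\varsigma^n_\tau,u^n_\tau),\qquad \beta^{i,*}_\tau(\varsigma^i_\tau,u^i_\tau)=\mathbb{E}_{\varsigma^{i+1}_\tau\sim T(\cdot\mid \varsigma^i_\tau,u^i_\tau)}\Big\{\max_{u^{i+1}_\tau\in U^{i+1}}\beta^{i+1,*}_\tau(\varsigma^{i+1}_\tau,u^{i+1}_\tau)\Big\}\ (i<n).$$ Then: (a) these functions are the optimal action-value functions of $\bar G_{s_\tau}^{\beta_\tau}$ (i.e. they solve Bellman's optimality equations of $\bar G_{s_\tau}^{\beta_\tau}$), and the optimal value of $\bar G_{s_\tau}^{\beta_\tau}$, namely $\mathbb{E}_{\varsigma^1_\tau}\{\max_{u^1_\tau}\beta^{1,*}_\tau(\varsigma^1_\tau,u^1_\tau)\}$ with $\varsigma^1_\tau=(s_\tau,o^1_\tau)$ and $o^1_\tau$ distributed according to the marginal of $s_\tau$, equals the optimal value $\max_{a_\tau}Q_{\beta_\tau}(s_\tau,a_\tau)$ of $G_{s_\tau}^{\beta_\tau}$; (b)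 any optimal solution of $\bar G_{s_\tau}^{\beta_\tau}$ is also an optimal solution of $G_{s_\tau}^{\beta_\tau}$: if $\sigma$ assigns an action to every node so as to maximize the expected payoff of $\bar G_{s_\tau}^{\beta_\tau}$, then the joint decision rule defined recursively for $i=1,\dots,n$ by $a^i_\tau(o^i_\tau)=\sigma(\varsigma^i_\tau)$ with $\varsigma^i_\tau=\langle s_\tau,o^{1:i}_\tau,a^{1:i-1}_\tau(o^{1:i-1}_\tau)\rangle$ maximizes $Q_{\beta_\tau}(s_\tau,\cdot)$; (c) in particular, the greedy decision rules defined recursively for $i=1,\dots,n$ by $$a^{i,*}_\tau(o^i_\tau)\in\arg\max_{u^i_\tau\in U^i}\beta^{i,*}_\tau(\varsigma^i_\tau,u^i_\tau),\qquad \varsigma^i_\tau=\langle s_\tau,o^{1:i}_\tau,a^{1:i-1,*}_\tau(o^{1:i-1}_\tau)\rangle,$$ form a joint decision rule $a^*_\tau=(a^{1,*}_\tau,\dots,a^{n,*}_\tau)$ that is optimal for $G_{s_\tau}^{\beta_\tau}$.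
   Context: An $n$-player Dec-POMDP is $M=\langle n,X,U,Z,p,r,s_0,\gamma,\ell\rangle$: $X$ a finite set of hidden states; $U^i$ a finite action set of player $i$, $U=U^1\times\dots\times U^n$; $Z^i$ a finite observation set of player $i$, $Z=Z^1\times\dots\times Z^n$; $p(y,z\mid x,u)$ the probability of moving from state $x$ to state $y$ and receiving joint observation $z$ after joint action $u$; $r\colon X\times U\to\mathbb{R}$ the reward; $s_0$ an initial distribution on $X$; $\gamma$ a discount factor; $\ell$ the number of stages. The private history of player $i$ at stage $\tau$ is $o^i_\tau=(u^i_{0:\tau-1},z^i_{1:\tau})$ (with $o^i_0=\emptyset$) and the joint history is $o_\tau=(o^1_\tau,\dots,o^n_\tau)$. Hierarchical information sharing (HIS): for every player $i>1$ there is a map $\zeta^i$ with $\zeta^i(z^i_\tau)=(u^{i-1}_{\tau-1},z^{i-1}_\tau)$, so that the private history $o^i_\tau$ of player $i$ determines the private histories $o^{1}_\tau,\dots,o^{i-1}_\tau$ of all players below it (player $n$'s history determines the joint history). A private decision rule $a^i_\tau$ maps private histories $o^i_\tau$ to actions in $U^i$; a joint decision rule is $a_\tau=(a^1_\tau,\dots,a^n_\tau)$ with $a_\tau(o)=(a^1_\tau(o^1),\dots,a^n_\tau(o^n))$; we write $a^{1:i}_\tau(o^{1:i}_\tau)=(a^1_\tau(o^1_\tau),\dots,a^i_\tau(o^i_\tau))$. An occupancy state $s_\tau$ is a probability distribution over pairs $(x,o)$ of a hidden state and a joint $\tau$-step history. Given a function $\beta_\tau\colon(x,o,u)\mapsto\beta_\tau(x,o,u)\in\mathbb{R}$,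 set $Q_{\beta_\tau}(s_\tau,a_\tau)=\sum_{x,o}s_\tau(x,o)\,\beta_\tau(x,o,a_\tau(o))$. The single-stage subgame $G_{s_\tau}^{\beta_\tau}$ is the common-payoff game in which the $n$ players choose a joint decision rule $a_\tau$ to maximize $Q_{\beta_\tau}(s_\tau,a_\tau)$. The extensive-form game $\bar G_{s_\tau}^{\beta_\tau}$: a central planner acts for players $1,2,\dots,n$ in turn. Nodes of player $1$ are $\varsigma^1_\tau=(s_\tau,o^1_\tau)$, reached with the marginal probability of $o^1_\tau$ under $s_\tau$; at a node $\varsigma^i_\tau$ of player $i$ the planner chooses $u^i_\tau\in U^i$, and for $i<n$ the game moves to the node $\varsigma^{i+1}_\tau=(\varsigma^i_\tau,u^i_\tau,o^{i+1}_\tau)$ of player $i+1$ with probability $T(\varsigma^{i+1}_\tau\mid\varsigma^i_\tau,u^i_\tau)=\Pr\{o^{i+1}_\tau\mid s_\tau,o^1_\tau,\dots,o^i_\tau\}$ (computed from $s_\tau$). After player $n$ chooses $u^n_\tau$ at $\varsigma^n_\tau$, the common payoff is $R(\varsigma^n_\tau,u^n_\tau)=\mathbb{E}_{x\sim\Pr\{\cdot\mid\varsigma^n_\tau,u^n_\tau\}}\{\beta_\tau(x,o,u)\}$, where $o=(o^1_\tau,\dots,o^n_\tau)$ and $u=(u^1_\tau,\dots,u^n_\tau)$ are read off the node and $\Pr\{x\mid\varsigma^n_\tau\}=s_\tau(x\mid o)$. The optimal action-value function of player $i$ gives, at node $\varsigma^i_\tau$ and action $u^i_\tau$, the maximal expected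 payoff obtainable after playing $u^i_\tau$ there. *)

(* Defs.v *)
(* Players are indexed 0..n-1 (paper: 1..n). *)
From HB Require Import structures.
From mathcomp Require Import all_boot all_order all_algebra.
Set Implicit Arguments. Unset Strict Implicit. Unset Printing Implicit Defensive.
Import Order.TTheory GRing.Theory Num.Theory.
Local Open Scope ring_scope.

Section Defs.
Variables (R : realFieldType) (n : nat) (X : finType) (O U : 'I_n -> finType).

Definition jhist := {dffun forall i : 'I_n, O i}.
Definition jact := {dffun forall i : 'I_n, U i}.

Definition agree_h (k : nat) (o o' : jhist) : bool :=
  [forall j : 'I_n, (j < k)%N ==> (o j == o' j)].
Definition agree_a (k : nat) (u u' : jact) : bool :=
  [forall j : 'I_n, (j < k)%N ==> (u j == u' j)].

(* maximum of f over the (finite) set P; 0 by convention if P is empty *)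
Definition maxf (T : finType) (P : pred T) (f : T -> R) : R :=
  if [pick t | P t] is Some t0 then \big[Num.max/f t0]_(t | P t) f t else 0.

(* HIS at the stage: det i j (o^i) is the history of player j determined by
   the history o^i of player i (j < i); a joint history is consistent if it
   obeys these maps. *)
Definition consistent (det : forall i j : 'I_n, O i -> O j) (o : jhist) : Prop :=
  forall i j : 'I_n, (j < i)%N -> o j = det i j (o i).

Definition drule := forall i : 'I_n, O i -> U i.
Definition jact_of (a : drule) (o : jhist) : jact := finfun (fun i => a i (o i)).

(* strategies of \bar G: sigma_i chooses u^i at the node
   (s, o^{1:i}, u^{1:i-1}); it is represented on full tuples and must depend
   only on the components o^{<=i}, u^{<i}. *)
Definition strategy := forall i : 'I_n, jhist -> jact -> U i.
Definition is_strategy (sg : strategy) : Prop :=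
  forall (i : 'I_n) (o o' : jhist) (u u' : jact),
    agree_h i.+1 o o' -> agree_a i u u' -> sg i o u = sg i o' u'.

Definition upd (u : jact) (j : 'I_n) (x : U j) : jact :=
  finfun (dfwith (fun k => u k) x).

Definition play (sg : strategy) (o : jhist) (k : nat) (u : jact) : jact :=
  foldl (fun v (j : 'I_n) => upd v (sg j o v)) u (filter (fun j : 'I_n => (k <= j)%N) (enum 'I_n)).

Variables (s : X -> jhist -> R) (beta : X -> jhist -> jact -> R).

Definition sO (o : jhist) : R := \sum_x s x o.
Definition mass (k : nat) (o : jhist) : R := \sum_(o' | agree_h k o o') sO o'.

Definition Rnode (o : jhist) (u : jact) : R := \sum_x (s x o / sO o) * beta x o u.

(* beta^{i,*}, computed backwards; bstar_aux m is the function of player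
   n-1-m (0-based).  The expectation over varsigma^{i+1} ~ T(.|varsigma^i,u^i)
   is the conditional expectation given o^{<=i}; the max over u^{i+1} is the
   max over joint actions agreeing with u on components <= i. *)
Fixpoint bstar_aux (m : nat) (o : jhist) (u : jact) : R :=
  match m with
  | 0 => Rnode o u
  | m'.+1 =>
      \sum_(o' | agree_h (n - m'.+1) o o')
        (sO o' / mass (n - m'.+1) o) *
        maxf (agree_a (n - m'.+1) u) (bstar_aux m' o')
  end.

Definition betastar (i : 'I_n) : jhist -> jact -> R := bstar_aux (n - i.+1).

Definition Vext : R := \sum_o sO o * maxf xpredT (bstar_aux (n - 1) o).

Definition Q (a : drule) : R := \sum_x \sum_o s x o * beta x o (jact_of a o).
Definition optimal_drule (a : drule) : Prop := forall a' : drule, Q a' <= Q a.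

(* expected payoff in \bar G, after node (o^{<=i}, u^{<i}) of player i and
   action u^i (read off u), the later players following sg *)
Definition cont (sg : strategy) (i : 'I_n) (o : jhist) (u : jact) : R :=
  \sum_x \sum_(o' | agree_h i.+1 o o')
     (s x o' / mass i.+1 o) * beta x o' (play sg o' i.+1 u).

(* expected payoff of \bar G under sg (the initial u0 is overwritten) *)
Definition Jext (sg : strategy) : R :=
  if [pick u : jact] is Some u0 then
    \sum_x \sum_o s x o * beta x o (play sg o 0 u0)
  else 0.

Definition induced (sg : strategy) (a : drule) : Prop :=
  forall x o, s x o != 0 -> forall i : 'I_n, a i (o i) = sg i o (jact_of a o).

Definition greedy (a : drule) : Prop :=
  forall x o, s x o != 0 -> forall (i : 'I_n) (u' : jact),
    agree_a i (jact_of a o) u' -> betastar i o u' <= betastar i o (jact_of a o).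

End Defs.

(* Main.v *)
Require Import Defs.
From HB Require Import structures.
From mathcomp Require Import all_boot all_order all_algebra.
From mathcomp Require Import zify ring.
From Stdlib Require Import FunctionalExtensionality.
Import Order.TTheory GRing.Theory Num.Theory.
Local Open Scope ring_scope.
Set Implicit Arguments. Unset Strict Implicit. Unset Printing Implicit Defensive.

Section M.
Variables (R : realFieldType) (T : finType).

Lemma maxf_ge (P : pred T) (f : T -> R) t : P t -> f t <= maxf P f.
Proof.
move=> Pt; rewrite /maxf; case: pickP => [t0 Pt0|/(_ t)]; last by rewrite Pt.
rewrite (bigD1 t) //=; by rewrite le_max lexx.
Qed.

Lemma maxf_att (P : pred T) (f : T -> R) t : P t -> exists2 t', P t' & maxf P f = f t'.
Proof.
move=> Pt; rewrite /maxf; case: pickP => [t0 Pt0|/(_ t)]; last by rewrite Pt.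
elim/big_ind: _ => //; first by exists t0.
move=> x y [tx Ptx ->] [ty Pty ->].
case: (leP (f tx) (f ty)) => h; [exists ty | exists tx] => //.
by move=> i Pi; exists i.
Qed.

Lemma maxf_max (P : pred T) (f : T -> R) t :
  P t -> (forall t', P t' -> f t' <= f t) -> maxf P f = f t.
Proof.
move=> Pt H; apply/le_anti; rewrite maxf_ge // andbT.
by have [t' Pt' ->] := maxf_att f Pt; apply: H.
Qed.

Lemma maxf_eq (P P' : pred T) (f : T -> R) : P =1 P' -> maxf P f = maxf P' f.
Proof.
move=> e; rewrite /maxf (eq_pick e); case: pickP => // t0 _.
by apply: eq_bigl.
Qed.

Lemma maxf_eqf (P : pred T) (f g : T -> R) : (forall t, P t -> f t = g t) -> maxf P f = maxf P g.
Proof.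
move=> e; rewrite /maxf; case: pickP => // t0 Pt0.
rewrite (e _ Pt0); exact: eq_bigr.
Qed.
End M.

Section Pf.
Variables (R : realFieldType) (n : nat) (X : finType) (O U : 'I_n -> finType).
Variables (s : X -> jhist O -> R) (beta : X -> jhist O -> jact U -> R).
Hypothesis s_ge0 : forall x o, 0 <= s x o.
Implicit Types (o : jhist O) (u : jact U) (w : jhist O -> R).

Lemma agreeHP k (o o' : jhist O) :
  reflect (forall j : 'I_n, (j < k)%N -> o j = o' j) (agree_h k o o').
Proof.
apply: (iffP forallP) => H j.
  by move=> hj; move: (H j); rewrite hj => /eqP.
by apply/implyP => hj; rewrite H.
Qed.

Lemma agreeAP k (o o' : jact U) :
  reflect (forall j : 'I_n, (j < k)%N -> o j = o' j) (agree_a k o o').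
Proof.
apply: (iffP forallP) => H j.
  by move=> hj; move: (H j); rewrite hj => /eqP.
by apply/implyP => hj; rewrite H.
Qed.

Lemma agreeH_refl k o : agree_h k o o.
Proof. by apply/agreeHP. Qed.
Lemma agreeH_sym k o o' : agree_h k o o' -> agree_h k o' o.
Proof. by move/agreeHP=> H; apply/agreeHP => j hj; rewrite H. Qed.
Lemma agreeH_trans k o1 o2 o3 : agree_h k o1 o2 -> agree_h k o2 o3 -> agree_h k o1 o3.
Proof. by move/agreeHP=> H1 /agreeHP H2; apply/agreeHP => j hj; rewrite H1 ?H2. Qed.
Lemma agreeH_mono k k' o o' : (k <= k')%N -> agree_h k' o o' -> agree_h k o o'.
Proof. by move=> hk /agreeHP H; apply/agreeHP => j hj; rewrite H //; apply: leq_trans hk. Qed.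
Lemma agreeA_refl k u : agree_a k u u.
Proof. by apply/agreeAP. Qed.
Lemma agreeA_sym k u u' : agree_a k u u' -> agree_a k u' u.
Proof. by move/agreeAP=> H; apply/agreeAP => j hj; rewrite H. Qed.
Lemma agreeA_trans k u1 u2 u3 : agree_a k u1 u2 -> agree_a k u2 u3 -> agree_a k u1 u3.
Proof. by move/agreeAP=> H1 /agreeAP H2; apply/agreeAP => j hj; rewrite H1 ?H2. Qed.
Lemma agreeA_mono k k' u u' : (k <= k')%N -> agree_a k' u u' -> agree_a k u u'.
Proof. by move=> hk /agreeAP H; apply/agreeAP => j hj; rewrite H //; apply: leq_trans hk. Qed.

Lemma agreeH_full o o' : agree_h n o o' -> o = o'.
Proof. by move/agreeHP => H; apply/ffunP => j; apply: H. Qed.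
Lemma agreeA_full u u' : agree_a n u u' -> u = u'.
Proof. by move/agreeAP => H; apply/ffunP => j; apply: H. Qed.

Lemma sO_ge0 o : 0 <= sO s o.
Proof. by apply: sumr_ge0 => x _. Qed.
Lemma mass_ge0 k o : 0 <= mass s k o.
Proof. by apply: sumr_ge0 => o' _; apply: sO_ge0. Qed.
Lemma s_le_sO x o : s x o <= sO s o.
Proof.
rewrite /sO (bigD1 x) //= lerDl; by apply: sumr_ge0.
Qed.
Lemma sO_le_mass k o : sO s o <= mass s k o.
Proof.
rewrite /mass (bigD1 o) ?agreeH_refl //= lerDl; apply: sumr_ge0 => ? _; exact: sO_ge0.
Qed.
Lemma mass_eq k o o' : agree_h k o o' -> mass s k o = mass s k o'.
Proof.
move=> h; apply: eq_bigl => o1; apply/idP/idP => h1.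
  exact: agreeH_trans (agreeH_sym h) h1.
exact: agreeH_trans h h1.
Qed.

Lemma tower k k' o (w : jhist O -> R) (G : jhist O -> jhist O -> R) :
  (k <= k')%N ->
  (forall o'', mass s k' o'' = 0 -> w o'' = 0) ->
  (forall o' o'', agree_h k' o' o'' -> G o' o'' = G o'' o'') ->
  \sum_(o' | agree_h k o o') (sO s o' / mass s k o) *
     \sum_(o'' | agree_h k' o' o'') (w o'' / mass s k' o') * G o' o''
  = \sum_(o'' | agree_h k o o'') (w o'' / mass s k o) * G o'' o''.
Proof.
move=> hk hw hG.
under eq_bigr => o' _ do rewrite big_distrr /=.
rewrite (exchange_big_dep (fun o'' => agree_h k o o'')) /=; last first.
  by move=> o' o'' h1 h2; apply: agreeH_trans h1 (agreeH_mono hk h2).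
apply: eq_bigr => o'' h''.
have -> : \sum_(o' | agree_h k o o' && agree_h k' o' o'')
      sO s o' / mass s k o * (w o'' / mass s k' o' * G o' o'')
   = \sum_(o' | agree_h k' o'' o') sO s o' * (w o'' / mass s k o * G o'' o'' / mass s k' o'').
  apply: eq_big => o'.
    apply/idP/idP.
      by case/andP => _ /agreeH_sym.
    move=> h; rewrite (agreeH_sym h) andbT.
    exact: agreeH_trans h'' (agreeH_mono hk h).
  case/andP => _ h.
  rewrite (hG _ _ h) (mass_eq h); ring.
rewrite -big_distrl /= -/(mass s k' o'').
have [m0|mn0] := eqVneq (mass s k' o'') 0.
  by rewrite m0 hw // ; ring.
by rewrite mulrC -!mulrA mulVf // mulr1.
Qed.


Lemma upd_in u (j : 'I_n) (x : U j) : upd u x j = x.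
Proof. by rewrite /upd ffunE dfwith_in. Qed.
Lemma upd_out u (j : 'I_n) (x : U j) k : j != k -> upd u x k = u k.
Proof. by move=> h; rewrite /upd ffunE dfwith_out. Qed.
Lemma upd_agree u (j : 'I_n) (x : U j) : agree_a j u (upd u x).
Proof.
apply/agreeAP => k hk; rewrite upd_out //; apply/negP => /eqP e.
by rewrite e ltnn in hk.
Qed.
Lemma upd_agree2 u u' (j : 'I_n) (x : U j) :
  agree_a j u u' -> agree_a j.+1 (upd u x) (upd u' x).
Proof.
move/agreeAP => H; apply/agreeAP => k hk.
have [e|ne] := eqVneq j k; first by subst k; rewrite !upd_in.
rewrite !upd_out // H //; rewrite ltnS leq_eqVlt in hk.
case/orP: hk => // /eqP e; by move: ne; rewrite -(inj_eq val_inj) /= e eqxx.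
Qed.
Lemma upd_self u (j : 'I_n) : upd u (u j) = u.
Proof.
apply/ffunP => k; have [e|ne] := eqVneq j k; first by subst k; rewrite upd_in.
by rewrite upd_out.
Qed.

Lemma filter_iota m d :
  filter (fun k => (m <= k)%N) (iota 0 (m + d)) = iota m d.
Proof.
rewrite iotaD filter_cat add0n.
have -> : filter (fun k => (m <= k)%N) (iota 0 m) = [::].
  rewrite (@eq_in_filter _ _ pred0) ?filter_pred0 // => k.
  by rewrite mem_iota add0n /= => h; rewrite leqNgt h.
rewrite cat0s; apply/all_filterP/allP => k; by rewrite mem_iota => /andP[].
Qed.

Lemma filter_ord (j : 'I_n) :
  filter (fun k : 'I_n => (j <= k)%N) (enum 'I_n)
  = j :: filter (fun k : 'I_n => (j.+1 <= k)%N) (enum 'I_n).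
Proof.
apply: (inj_map val_inj); rewrite /=.
have F (m : nat) : [seq val i | i : 'I_n <- enum 'I_n & (m <= i)%N]
   = filter (fun k => (m <= k)%N) (iota 0 n) by rewrite -val_enum_ord filter_map.
rewrite !F.
have hj := ltn_ord j.
have h1 := filter_iota j (n - j); rewrite subnKC in h1; last exact: ltnW.
have h2 := filter_iota j.+1 (n - j.+1); rewrite subnKC in h2; last exact: hj.
rewrite h1 h2.
have -> : (n - j = (n - j.+1).+1)%N by lia.
by [].
Qed.

Lemma play_step (sg : strategy O U) o (j : 'I_n) u :
  play sg o j u = play sg o j.+1 (upd u (sg j o u)).
Proof. by rewrite /play filter_ord. Qed.

Lemma play_end (sg : strategy O U) o u : play sg o n u = u.
Proof.
rewrite /play (@eq_filter _ _ pred0) ?filter_pred0 // => k.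
by rewrite /= leqNgt ltn_ord.
Qed.

Definition Bk (k : nat) := bstar_aux s beta (n - k.+1).

Lemma B_S k o u : (k.+1 < n)%N ->
  Bk k o u = \sum_(o' | agree_h k.+1 o o') (sO s o' / mass s k.+1 o) *
                maxf (agree_a k.+1 u) (Bk k.+1 o').
Proof.
move=> hk; rewrite /Bk.
have -> : (n - k.+1 = (n - k.+2).+1)%N by lia.
rewrite /=.
have -> : (n - (n - k.+2).+1 = k.+1)%N by lia.
by [].
Qed.

Lemma B_last k : k.+1 = n -> Bk k = Rnode s beta.
Proof. by move=> hk; rewrite /Bk hk subnn. Qed.

Lemma B_dep k o o' u u' : (k < n)%N -> agree_h k.+1 o o' -> agree_a k.+1 u u' ->
  Bk k o u = Bk k o' u'.
Proof.
move=> hk ho hu.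
have [e|ne] := eqVneq k.+1 n.
  rewrite (B_last e); move: ho hu; rewrite e => /agreeH_full -> /agreeA_full -> //.
have hk1 : (k.+1 < n)%N by rewrite ltn_neqAle ne hk.
rewrite !B_S // (mass_eq ho).
apply: eq_big => [o1|o1 _].
  apply/idP/idP => h; first exact: agreeH_trans (agreeH_sym ho) h.
  exact: agreeH_trans ho h.
congr (_ * _); apply: maxf_eq => t; apply/idP/idP => h.
  exact: agreeA_trans (agreeA_sym hu) h.
exact: agreeA_trans hu h.
Qed.


Lemma s_mass0 x k o : mass s k o = 0 -> s x o = 0.
Proof.
move=> h; apply/le_anti; rewrite s_ge0 andbT -h.
exact: le_trans (s_le_sO x o) (sO_le_mass k o).
Qed.
Lemma sO_mass0 k o : mass s k o = 0 -> sO s o = 0.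
Proof.
move=> h; apply/le_anti; rewrite sO_ge0 andbT -h; exact: sO_le_mass.
Qed.

Lemma swap_sum (P : pred (jhist O)) (a : jhist O -> R) (F : X -> jhist O -> R) :
  \sum_x \sum_(o | P o) a o * F x o = \sum_(o | P o) a o * \sum_x F x o.
Proof.
rewrite (exchange_big_dep P) //=; apply: eq_bigr => o Po.
by rewrite big_distrr; apply: eq_bigl => x; rewrite Po.
Qed.

Lemma single_class (F : jhist O -> R) o : \sum_(o' | agree_h n o o') F o' = F o.
Proof.
rewrite (big_pred1 o) // => o'; rewrite /=.
apply/idP/eqP => [/agreeH_full -> // | ->]; exact: agreeH_refl.
Qed.

Lemma cont_step (sg : strategy O U) (hs : is_strategy sg) (i j : 'I_n) o u :
  val j = i.+1 ->
  cont s beta sg i o u = \sum_(o' | agree_h i.+1 o o') (sO s o' / mass s i.+1 o) *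
      cont s beta sg j o' (upd u (sg j o' u)).
Proof.
case: j => j hj /= ej; subst j.
rewrite /cont -swap_sum; apply: eq_bigr => x _.
have T := @tower i.+1 i.+2 o (s x)
   (fun o' o'' => beta x o'' (play sg o'' i.+2 (upd u (sg (Ordinal hj) o' u)))) (leqnSn _)
   (fun o'' h => s_mass0 x h).
rewrite /= in T; rewrite T; last first.
  move=> o' o'' h; by rewrite (hs (Ordinal hj) o' o'' u u h (agreeA_refl _ _)).
apply: eq_bigr => o'' _.
by rewrite (play_step sg o'' (Ordinal hj) u).
Qed.

Hypothesis hU : forall i : 'I_n, (0 < #|U i|)%N.
Hypothesis s_sum1 : \sum_x \sum_o s x o = 1.

Lemma exU (j : 'I_n) : exists x : U j, xpredT x.
Proof. by case/card_gt0P: (hU j) => x _; exists x. Qed.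
Definition dU (j : 'I_n) : U j := xchoose (exU j).

Definition sgs : strategy O U := fun j o v => [arg max_(x > dU j) Bk j o (upd v x)]%O.

Lemma sgs_max (j : 'I_n) o v (x : U j) : Bk j o (upd v x) <= Bk j o (upd v (sgs j o v)).
Proof. rewrite /sgs; case: arg_maxP => // y _ H; exact: H. Qed.

Lemma sgs_strategy : is_strategy sgs.
Proof.
move=> j o o' v v' ho hv; rewrite /sgs.
have -> : (fun x : U j => Bk j o (upd v x)) = (fun x : U j => Bk j o' (upd v' x)).
  apply: functional_extensionality => x; apply: B_dep => //; exact: upd_agree2.
by [].
Qed.

Lemma upd_agree3 u t (j : 'I_n) : agree_a j u t -> agree_a j.+1 t (upd u (t j)).
Proof.
move=> h; have := upd_agree2 (t j) h; rewrite upd_self => h2; exact: agreeA_sym.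
Qed.

Lemma cont_main m : forall i : 'I_n, (i + m)%N = n.-1 -> forall o u,
   (forall sg, is_strategy sg -> cont s beta sg i o u <= Bk i o u)
   /\ cont s beta sgs i o u = Bk i o u.
Proof.
elim: m => [|m IH] i hi o u.
  have hi1 : i.+1 = n by have := ltn_ord i; lia.
  suff E : forall sg, cont s beta sg i o u = Bk i o u.
    by split; [move=> sg _; rewrite E | exact: E].
  move=> sg; rewrite /cont (B_last hi1) /Rnode hi1; apply: eq_bigr => x _.
  rewrite (single_class (fun o' => s x o' / mass s n o * beta x o' (play sg o' n u))).
  by rewrite play_end /mass single_class.
have hj : (i.+1 < n)%N by have := ltn_ord i; lia.
pose j := Ordinal hj.
have IHj := IH j (ltac:(rewrite /=; lia)).
rewrite B_S //; split.
  move=> sg hs; rewrite (cont_step hs (j:=j)) //.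
  apply: ler_sum => o' _; apply: ler_wpM2l.
    by apply: divr_ge0; [exact: sO_ge0 | exact: mass_ge0].
  apply: le_trans ((IHj o' _).1 sg hs) _.
  by apply: maxf_ge; exact: (upd_agree u (sg j o' u)).
rewrite (cont_step sgs_strategy (j:=j)) //.
apply: eq_bigr => o' _; congr (_ * _); rewrite (IHj _ _).2; symmetry.
apply: maxf_max; first exact: (upd_agree u (sgs j o' u)).
move=> t' ht'.
rewrite (@B_dep j o' o' t' (upd u (t' j)) (ltn_ord j) (agreeH_refl _ _) (@upd_agree3 u t' j ht')).
exact: sgs_max.
Qed.

Lemma mass0 o : mass s 0 o = 1.
Proof.
rewrite /mass (eq_bigl xpredT); last by move=> o'; apply/agreeHP.
by rewrite /sO exchange_big.
Qed.

Lemma top_tower k (w : jhist O -> R) (G : jhist O -> jhist O -> R) :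
  (forall o'', mass s k o'' = 0 -> w o'' = 0) ->
  (forall o' o'', agree_h k o' o'' -> G o' o'' = G o'' o'') ->
  \sum_o sO s o * \sum_(o'' | agree_h k o o'') (w o'' / mass s k o) * G o o''
  = \sum_o w o * G o o.
Proof.
move=> hw hG.
case: (pickP (fun _ : jhist O => true)) => [o0 _ | none]; last first.
  by rewrite !big1 // => o; have := none o.
have T := @tower 0 k o0 w G (leq0n k) hw hG.
rewrite mass0 in T.
have E (F : jhist O -> R) : \sum_(o | agree_h 0 o0 o) F o = \sum_o F o.
  by apply: eq_bigl => o; apply/agreeHP.
rewrite !E in T.
transitivity (\sum_o sO s o / 1 *
   \sum_(o'' | agree_h k o o'') (w o'' / mass s k o) * G o o'').
  by apply: eq_bigr => o _; rewrite divr1.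
rewrite T; apply: eq_bigr => o _; by rewrite divr1.
Qed.


Hypothesis hn : (0 < n)%N.
Definition i0 : 'I_n := Ordinal hn.

Lemma Jext_eq (sg : strategy O U) (hs : is_strategy sg) : exists u0 : jact U,
  Jext s beta sg = \sum_o sO s o * cont s beta sg i0 o (upd u0 (sg i0 o u0)).
Proof.
rewrite /Jext; case: pickP => [u0 _|none]; last first.
  by have := none (finfun dU : jact U).
exists u0.
rewrite /cont.
under [RHS]eq_bigr => o _ do rewrite big_distrr /=.
rewrite [RHS]exchange_big /=; apply: eq_bigr => x _.
have T := @top_tower 1 (s x)
   (fun o o'' => beta x o'' (play sg o'' 1 (upd u0 (sg i0 o u0))))
   (fun o'' h => s_mass0 x h).
rewrite /= in T; rewrite T; last first.
  move=> o' o'' h; by rewrite (hs i0 o' o'' u0 u0 h (agreeA_refl _ _)).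
apply: eq_bigr => o _; by rewrite (play_step sg o i0 u0).
Qed.

Definition S (k : nat) (a : drule O U) := \sum_o sO s o * Bk k o (jact_of a o).

Lemma ja_agree (a : drule O U) k o o' : agree_h k o o' -> agree_a k (jact_of a o) (jact_of a o').
Proof.
move/agreeHP => h; apply/agreeAP => j hj; by rewrite !ffunE h.
Qed.

Lemma S_last k a : k.+1 = n -> S k a = Q s beta a.
Proof.
move=> hk; rewrite /S /Q (B_last hk) exchange_big /=; apply: eq_bigr => o _.
rewrite /Rnode big_distrr /=; apply: eq_bigr => x _.
have [e|ne] := eqVneq (sO s o) 0.
  have : s x o = 0 by apply/le_anti; rewrite s_ge0 -e s_le_sO.
  by move=> ->; rewrite e; ring.
by rewrite mulrA mulrCA mulfV // mulr1.
Qed.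

Lemma S_step k a : (k.+1 < n)%N ->
  S k a = \sum_o sO s o * maxf (agree_a k.+1 (jact_of a o)) (Bk k.+1 o).
Proof.
move=> hk; rewrite /S.
under eq_bigr => o _ do rewrite B_S //.
have T := @top_tower k.+1 (sO s)
   (fun o o'' => maxf (agree_a k.+1 (jact_of a o)) (Bk k.+1 o''))
   (fun o'' h => sO_mass0 h).
rewrite /= in T; rewrite T // => o' o'' h.
apply: maxf_eq => t; apply/idP/idP => h1.
  exact: agreeA_trans (agreeA_sym (ja_agree a h)) h1.
exact: agreeA_trans (ja_agree a h) h1.
Qed.

Lemma exists_pos o : sO s o != 0 -> exists x, s x o != 0.
Proof.
move=> h; case: (pickP (fun x => s x o != 0)) => [x hx|none]; first by exists x.
move: h; rewrite /sO big1 ?eqxx // => x _; by move: (none x) => /negbFE/eqP.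
Qed.

Lemma S_le k a : (k.+1 < n)%N -> S k.+1 a <= S k a.
Proof.
move=> hk; rewrite (@S_step k a hk) /S; apply: ler_sum => o _; apply: ler_wpM2l; first exact: sO_ge0.
apply: maxf_ge; exact: agreeA_refl.
Qed.

Lemma S_eq k a : (k.+1 < n)%N -> greedy s beta a -> S k.+1 a = S k a.
Proof.
move=> hk hg; rewrite (@S_step k a hk) /S; apply: eq_bigr => o _.
have [e|ne] := eqVneq (sO s o) 0; first by rewrite e !mul0r.
have [x hx] := exists_pos ne.
congr (_ * _); symmetry; apply: maxf_max; first exact: agreeA_refl.
move=> t' ht'; exact: (hg x o hx (Ordinal hk) t' ht').
Qed.

Lemma S0_le a : S 0 a <= Vext s beta.
Proof.
apply: ler_sum => o _; apply: ler_wpM2l; first exact: sO_ge0.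
exact: (@maxf_ge _ _ xpredT (bstar_aux s beta (n - 1) o)).
Qed.

Lemma S0_eq a : greedy s beta a -> S 0 a = Vext s beta.
Proof.
move=> hg; apply: eq_bigr => o _.
have [e|ne] := eqVneq (sO s o) 0; first by rewrite e !mul0r.
have [x hx] := exists_pos ne.
congr (_ * _); symmetry; apply: (@maxf_max _ _ xpredT) => // t' _.
apply: (hg x o hx i0 t'); by apply/agreeAP.
Qed.

Lemma chain a : Q s beta a <= S 0 a /\ (greedy s beta a -> Q s beta a = S 0 a).
Proof.
suff H : forall m, (m < n)%N ->
    Q s beta a <= S (n.-1 - m) a /\ (greedy s beta a -> Q s beta a = S (n.-1 - m) a).
  by have := H n.-1 (ltac:(lia)); rewrite subnn.
elim => [_|m IH hm].
  rewrite subn0 S_last; last by lia.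
  by split => //.
have [IH1 IH2] := IH (ltnW hm).
have e : (n.-1 - m = (n.-1 - m.+1).+1)%N by lia.
rewrite e in IH1 IH2.
have hk : ((n.-1 - m.+1).+1 < n)%N by lia.
split; first exact: le_trans IH1 (S_le a hk).
by move=> hg; rewrite IH2 // S_eq.
Qed.

Lemma play_induced (sg : strategy O U) (hs : is_strategy sg) (a : drule O U) o :
  (forall i, a i (o i) = sg i o (jact_of a o)) ->
  forall u0, play sg o 0 u0 = jact_of a o.
Proof.
move=> Ha.
suff H : forall m k, (k + m)%N = n -> forall v, agree_a k v (jact_of a o) ->
    play sg o k v = jact_of a o.
  by move=> u0; apply: (H n 0) => //; apply/agreeAP.
elim => [|m IH] k hk v hv.
  rewrite addn0 in hk; subst k; rewrite play_end; exact: agreeA_full.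
have hkn : (k < n)%N by lia.
rewrite (play_step sg o (Ordinal hkn) v) /=.
apply: IH; first by lia.
have -> : sg (Ordinal hkn) o v = jact_of a o (Ordinal hkn).
  rewrite ffunE Ha; apply: hs => //; exact: agreeH_refl.
have h2 := upd_agree2 (jact_of a o (Ordinal hkn)) hv.
by rewrite upd_self in h2.
Qed.


Lemma build (det : forall i j : 'I_n, O i -> O j) (sg : strategy O U) (hs : is_strategy sg) :
  exists a : drule O U, forall o, consistent det o -> forall i, a i (o i) = sg i o (jact_of a o).
Proof.
case: (pickP (fun _ : jhist O => true)) => [o0 _ | none]; last first.
  by exists (fun i _ => dU i) => o; have := none o.
suff H : forall k, (k <= n)%N -> exists a : drule O U, forall o, consistent det o ->
    forall i : 'I_n, (i < k)%N -> a i (o i) = sg i o (jact_of a o).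
  have [a Ha] := H n (leqnn n); exists a => o ho i; exact: Ha.
elim => [_|k IH hk]; first by exists (fun i _ => dU i).
have [a Ha] := IH (ltnW hk).
pose kk : 'I_n := Ordinal hk.
pose oh (h : O kk) : jhist O :=
  finfun (fun j : 'I_n => if (j < k)%N then det kk j h else dfwith (fun j => o0 j) h j).
pose a' : drule O U :=
  @dfwith _ (fun i => O i -> U i) a kk (fun h : O kk => sg kk (oh h) (jact_of a (oh h))).
have F1 : forall j : 'I_n, (j < k)%N -> a' j = a j.
  move=> j hj; rewrite /a' dfwith_out //; apply/negP => /eqP e.
  by move: hj; rewrite -e ltnn.
have F2 : a' kk = (fun h : O kk => sg kk (oh h) (jact_of a (oh h))) by rewrite /a' dfwith_in.
exists a' => o ho i hi.
have F3 : agree_a k (jact_of a o) (jact_of a' o).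
  by apply/agreeAP => j hj; rewrite !ffunE F1.
have [hik|hik] := ltnP i k.
  rewrite F1 // Ha //; apply: hs; first exact: agreeH_refl.
  exact: agreeA_mono (ltnW hik) F3.
have e : i = kk by apply: val_inj => /=; lia.
subst i.
have F4 : agree_h k.+1 (oh (o kk)) o.
  apply/agreeHP => j hj; rewrite ffunE.
  have [hjk|hjk] := ltnP j k.
    by rewrite (ho kk j hjk).
  have e : j = kk by apply: val_inj => /=; lia.
  by subst j; rewrite dfwith_in.
have F5 : agree_a k (jact_of a (oh (o kk))) (jact_of a' o).
  apply/agreeAP => j hj; rewrite !ffunE F1 //.
  by rewrite hj (ho kk j hj).
rewrite F2 /=; exact: (hs kk _ _ _ _ F4 F5).
Qed.

End Pf.

Theorem theorem1 (R : realFieldType) (n : nat) (X : finType)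
    (O U : 'I_n -> finType) (det : forall i j : 'I_n, O i -> O j)
    (s : X -> jhist O -> R) (beta : X -> jhist O -> jact U -> R)
    (hn : (0 < n)%N) (hU : forall i : 'I_n, (0 < #|U i|)%N)
    (s_ge0 : forall x o, 0 <= s x o)
    (s_sum1 : \sum_x \sum_o s x o = 1)
    (HIS : forall x o, s x o != 0 -> consistent det o) :
  (* (a) beta^{i,*} are the optimal action-value functions of \bar G *)
  (forall (i : 'I_n) (o : jhist O) (u : jact U),
      (forall sg : strategy O U, is_strategy sg -> cont s beta sg i o u <= betastar s beta i o u)
      /\ (exists sg : strategy O U, is_strategy sg /\ cont s beta sg i o u = betastar s beta i o u))
  (* (a) Vext is the optimal value of \bar G ... *)
  /\ ((forall sg : strategy O U, is_strategy sg -> Jext s beta sg <= Vext s beta)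
      /\ (exists sg : strategy O U, is_strategy sg /\ Jext s beta sg = Vext s beta))
  (* ... and equals max_a Q_beta(s, a) *)
  /\ ((forall a : drule O U, Q s beta a <= Vext s beta)
      /\ (exists a : drule O U, Q s beta a = Vext s beta))
  (* (b) *)
  /\ (forall sg : strategy O U, is_strategy sg ->
        (forall sg' : strategy O U, is_strategy sg' -> Jext s beta sg' <= Jext s beta sg) ->
        (exists a : drule O U, induced s sg a)
        /\ (forall a : drule O U, induced s sg a -> optimal_drule s beta a))
  (* (c) *)
  /\ ((exists a : drule O U, greedy s beta a)
      /\ (forall a : drule O U, greedy s beta a -> optimal_drule s beta a)).
Proof.
have sgsS := sgs_strategy s beta hU.
have CM (i : 'I_n) o u := @cont_main R n X O U s beta s_ge0 hU (n.-1 - i) i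
     (ltac:(have := ltn_ord i; lia)) o u.
have A1 : forall (i : 'I_n) (o : jhist O) (u : jact U),
      (forall sg : strategy O U, is_strategy sg -> cont s beta sg i o u <= betastar s beta i o u)
      /\ (exists sg : strategy O U, is_strategy sg /\ cont s beta sg i o u = betastar s beta i o u).
  move=> i o u; split; first exact: (CM i o u).1.
  by exists (sgs s beta hU); split => //; exact: (CM i o u).2.
have J1 : forall sg : strategy O U, is_strategy sg -> Jext s beta sg <= Vext s beta.
  move=> sg hs; have [u0 ->] := Jext_eq beta s_ge0 hU s_sum1 hn hs.
  apply: ler_sum => o _; apply: ler_wpM2l; first exact: sO_ge0.
  apply: le_trans ((CM _ o _).1 sg hs) _.
  exact: (@maxf_ge _ _ xpredT (bstar_aux s beta (n - 1) o)).
have J2 : Jext s beta (sgs s beta hU) = Vext s beta.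
  have [u0 ->] := Jext_eq beta s_ge0 hU s_sum1 hn sgsS.
  apply: eq_bigr => o _; congr (_ * _); rewrite (CM _ o _).2; symmetry.
  apply: (@maxf_max _ _ xpredT) => // t' _.
  change (Bk s beta (i0 hn) o t' <= Bk s beta (i0 hn) o (upd u0 (sgs s beta hU (i0 hn) o u0))).
  rewrite (@B_dep R n X O U s beta (i0 hn) o o t' (upd u0 (t' (i0 hn))) (ltn_ord _)
     (agreeH_refl _ _) (@upd_agree3 n U u0 t' (i0 hn) (ltac:(by apply/agreeAP)))).
  exact: sgs_max.
have G1 : exists a : drule O U, greedy s beta a /\ induced s (sgs s beta hU) a.
  have [a Ha] := build hU hn det sgsS.
  exists a; split; last by move=> x o hx i; apply: Ha; exact: HIS hx.
  move=> x o hx i u' hu'.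
  have Hi := Ha o (HIS _ _ hx) i.
  change (Bk s beta i o u' <= Bk s beta i o (jact_of a o)).
  rewrite (@B_dep R n X O U s beta i o o u' (upd (jact_of a o) (u' i)) (ltn_ord _)
     (agreeH_refl _ _) (@upd_agree3 n U _ u' i hu')).
  apply: le_trans (sgs_max _ _ _ _ _ _) _.
  have E : a i (o i) = jact_of a o i by rewrite ffunE.
  by rewrite -Hi E upd_self.
have QV : forall a : drule O U, Q s beta a <= Vext s beta.
  move=> a; exact: le_trans (chain beta s_ge0 s_sum1 hn a).1 (S0_le beta s_ge0 a).
have QG : forall a, greedy s beta a -> Q s beta a = Vext s beta.
  move=> a hg; rewrite ((chain beta s_ge0 s_sum1 hn a).2 hg). exact: (S0_eq hn hg).
have [ag [agg _]] := G1.
split => //; split; first by split => //; exists (sgs s beta hU).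
split; first by split => //; exists ag; exact: QG.
split.
  move=> sg hs hopt; split.
    have [a Ha] := build hU hn det hs.
    by exists a => x o hx i; apply: Ha; exact: HIS hx.
  move=> a hind a'.
  have QJ : Q s beta a = Jext s beta sg.
    rewrite /Jext; case: pickP => [u0 _|none]; last first.
      by have := none (finfun (dU hU) : jact U).
    apply: eq_bigr => x _; apply: eq_bigr => o _.
    have [e|ne] := eqVneq (s x o) 0; first by rewrite e !mul0r.
    by rewrite (play_induced hn hs (hind x o ne)).
  rewrite QJ; apply: le_trans (QV a') _; rewrite -J2; exact: hopt.
split; first by exists ag.
move=> a hg a'; rewrite (QG a hg); exact: QV.
Qed.
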